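(* Let $(S,\Delta,\mathbb{P})$ be a probability space, $(U,d)$ a separable metric space, $\mathfrak{X}$ the set of $U$-valued random variables on $S$, $\mathcal{I}$ an ideal on $\mathbb{N}$, and $\underline{X}=\{X_n\}$ a sequence in $\mathfrak{X}$. If $\mathfrak{B}$ is a compact subset of $(\mathfrak{X}^0,\rho)$ such that $\{n\in\mathbb{N}:X_n\in\mathfrak{B}\}\notin\mathcal{I}$, then $\Gamma^{r^s}_{\underline{X}}(\mathcal{I}^{\mathbb{P}})\neq\varnothing$ for every $r>0$.
   Context: The Ky Fan metric is $\rho(X,Y)=\inf\{\varepsilon>0:\mathbb{P}(d(X,Y)>\varepsilon)\leq\varepsilon\}$; $\mathfrak{X}^0$ is the set of equivalence classes of $\mathfrak{X}$ under almost sure equality, on which $\rho$ is a metric. An ideal on $\mathbb{N}$ is a family $\mathcal{I}\subseteq\mathcal{P}(\mathbb{N})$ with $\varnothing\in\mathcal{I}$, closed under finite unions and under subsets. $\Gamma^{r^s}_{\underline{X}}(\mathcal{I}^{\mathbb{P}})$ (strong rough $\mathcal{I}$-cluster points in probability) is the set of $Y\in\mathfrak{X}$ with $\{n:\mathbb{P}(d(X_n,Y)<r+\varepsilon)>1-\delta\}\notin\mathcal{I}$ for all $\varepsilon,\delta>0$. *)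

(* Defs.v *)
From HB Require Import structures.
From mathcomp Require Import all_boot all_order all_algebra.
From mathcomp Require Import all_classical all_reals all_analysis.
Set Implicit Arguments. Unset Strict Implicit. Unset Printing Implicit Defensive.
Import Order.TTheory GRing.Theory Num.Theory.
Local Open Scope classical_set_scope.
Local Open Scope ring_scope.

Section Defs.
Context {R : realType}.

Definition is_metric {U : Type} (d : U -> U -> R) : Prop :=
  [/\ forall x y, 0 <= d x y,
      forall x y, d x y = 0 <-> x = y,
      forall x y, d x y = d y x &
      forall x y z, d x z <= d x y + d y z].

Definition separable_metric {U : Type} (d : U -> U -> R) : Prop :=
  exists D : set U, countable D /\
    forall x (e : R), 0 < e -> exists2 y, D y & d x y < e.

Definition metric_open {U : Type} (d : U -> U -> R) (A : set U) : Prop :=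
  forall x, A x -> exists2 e : R, 0 < e & forall y, d x y < e -> A y.

Definition borel_d {U : Type} (d : U -> U -> R) : set (set U) :=
  <<s metric_open d >>.

Definition random_var {dS : measure_display} {S : measurableType dS}
  {U : Type} (d : U -> U -> R) (X : S -> U) : Prop :=
  forall B, borel_d d B -> measurable (X @^-1` B).

Definition ky_fan {dS : measure_display} {S : measurableType dS}
  (P : probability S R) {U : Type} (d : U -> U -> R) (X Y : S -> U) : R :=
  inf [set e : R | 0 < e /\ lee (P [set s | e < d (X s) (Y s)]) e%:E].

Definition as_eq {dS : measure_display} {S : measurableType dS}
  (P : probability S R) {U : Type} (X Y : S -> U) : Prop :=
  P.-negligible [set s | X s <> Y s].

Definition rho_open {dS : measure_display} {S : measurableType dS}
  (P : probability S R) {U : Type} (d : U -> U -> R) (O : set (S -> U)) : Prop :=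
  forall X, random_var d X -> O X ->
    exists2 e : R, 0 < e &
      forall Y, random_var d Y -> ky_fan P d X Y < e -> O Y.

(* A subset of frak X^0, represented as a set of random variables that is
   saturated w.r.t. almost sure equality, and compact for rho
   (every open cover has a finite subcover). *)
Definition rho_compact_class {dS : measure_display} {S : measurableType dS}
  (P : probability S R) {U : Type} (d : U -> U -> R) (B : set (S -> U)) : Prop :=
  [/\ B `<=` random_var d,
      (forall X Y, random_var d X -> random_var d Y -> as_eq P X Y -> B X -> B Y) &
      forall (I : Type) (O : I -> set (S -> U)),
        (forall i, rho_open P d (O i)) ->
        B `<=` \bigcup_i O i ->
        exists F : set I, finite_set F /\ B `<=` \bigcup_(i in F) O i].

Definition strong_rough_I_cluster {dS : measure_display} {S : measurableType dS}
  (P : probability S R) {U : Type} (d : U -> U -> R)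
  (I : set (set nat)) (r : R) (X : nat -> S -> U) : set (S -> U) :=
  [set Y | random_var d Y /\
     forall eps delta : R, 0 < eps -> 0 < delta ->
       ~ I [set n | lte (1 - delta)%:E (P [set s | d (X n s) (Y s) < r + eps])]].

End Defs.

Definition is_ideal (I : set (set nat)) : Prop :=
  [/\ I set0,
      forall A B, I A -> I B -> I (A `|` B) &
      forall A B, B `<=` A -> I A -> I B].

(* Main.v *)
Require Import Defs.
From HB Require Import structures.
From mathcomp Require Import all_boot all_order all_algebra.
From mathcomp Require Import all_classical all_reals all_analysis.
From mathcomp Require Import lra.
Import Order.TTheory GRing.Theory Num.Theory.
Local Open Scope classical_set_scope.
Local Open Scope ring_scope.

Lemma ideal_fin_union (I : set (set nat)) (hI : is_ideal I) T (F : set T)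
  (G : T -> set nat) : finite_set F -> (forall y, F y -> I (G y)) ->
  I (\bigcup_(y in F) G y).
Proof.
case: hI => I0 IU IS.
have Iord : forall n (H : nat -> set nat), (forall k, (k < n)%N -> I (H k)) ->
    I [set m | exists k, (k < n)%N /\ H k m].
  elim => [|n IH] H hH.
    by apply: (IS set0) => // m [k []].
  apply: (IS ([set m | exists k, (k < n)%N /\ H k m] `|` H n)); last first.
    apply: IU; last exact: hH.
    by apply: IH => k hk; apply: hH; rewrite ltnS ltnW.
  move=> m [k [hk hm]]; rewrite ltnS leq_eqVlt in hk.
  by case/orP: hk => [/eqP ek|hk]; [right; rewrite -ek|left; exists k].
move=> [n /card_set_bijP [h [hmap hinj hsurj]]] hG.
apply: (IS [set m | exists k, (k < n)%N /\
   (\bigcup_(y in [set y | F y /\ h y = k]) G y) m]).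
  move=> m [y Fy Gym]; exists (h y); split; first by have := hmap y Fy.
  by exists y.
apply: Iord => k hk.
case: (pselect (exists y, F y /\ h y = k)) => [[y0 [Fy0 hy0]]|ny].
  apply: (IS (G y0)); last exact: hG.
  move=> m [y [Fy hy] Gm]; have -> : y0 = y; last by [].
  by apply: hinj; rewrite ?inE // hy hy0.
apply: (IS set0) => // m [y yF _]; exfalso; exact: ny (ex_intro _ y yF).
Qed.

Section Aux.
Context (R : realType) (dS : measure_display) (S : measurableType dS)
  (P : probability S R) (U : Type) (d : U -> U -> R)
  (hd : is_metric d) (hsep : separable_metric d).

Lemma d_ge0 x y : 0 <= d x y. Proof. by case: hd. Qed.
Lemma d_sym x y : d x y = d y x. Proof. by case: hd. Qed.
Lemma d_tri x y z : d x z <= d x y + d y z. Proof. by case: hd. Qed.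
Lemma d_xx x : d x x = 0. Proof. by case: hd => _ h _ _; apply/h. Qed.

Lemma open_lt q c : metric_open d [set u | d u q < c].
Proof.
move=> u /= hu; exists (c - d u q); first by rewrite subr_gt0.
move=> v hv; have := d_tri v u q; rewrite (d_sym v u) => h.
move: hv h; rewrite /=; lra.
Qed.

Lemma open_gt q c : metric_open d [set u | c < d q u].
Proof.
move=> u /= hu; exists (d q u - c); first by rewrite subr_gt0.
move=> v hv; have := d_tri q v u; rewrite (d_sym v u) => h.
move: hv h; rewrite /=; lra.
Qed.

Lemma rv_meas (Y : S -> U) A : random_var d Y -> metric_open d A -> measurable (Y @^-1` A).
Proof. by move=> hY hA; apply: hY; apply: sub_sigma_algebra. Qed.

Lemma meas_gt (Y Z : S -> U) a : random_var d Y -> random_var d Z ->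
  measurable [set s | a < d (Y s) (Z s)].
Proof.
move=> hY hZ; case: hsep => D [/countable_injP [f finj] dense].
pose H (m n : nat) := [set s | exists q, [/\ D q, f q = n, d (Y s) q < m.+1%:R^-1 &
   a + m.+1%:R^-1 < d q (Z s)]].
have -> : [set s | a < d (Y s) (Z s)] = \bigcup_m \bigcup_n H m n.
  apply/seteqP; split => s /=.
  - move=> has.
    have [m hm] : exists m : nat, 0 + m.+1%:R^-1 < (d (Y s) (Z s) - a) / 3%:R.
      by apply: ltr_add_invr; rewrite divr_gt0 // subr_gt0.
    rewrite add0r in hm.
    have [q Dq hq] := dense (Y s) m.+1%:R^-1 ltac:(by rewrite invr_gt0).
    exists m => //; exists (f q) => //; exists q; split => //.
    have := d_tri (Y s) q (Z s); move: hm hq; set t := m.+1%:R^-1.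
    set u := d (Y s) (Z s); set v := d (Y s) q; set w := d q (Z s) => h1 h2 h3.
    have h0 : 0 < t by rewrite invr_gt0.
    lra.
  - move=> [m _ [n _ [q [Dq _ h1 h2]]]].
    have := d_tri q (Y s) (Z s); rewrite (d_sym q (Y s)).
    have h0 : 0 < m.+1%:R^-1 :> R by rewrite invr_gt0.
    move: h1 h2; set t := m.+1%:R^-1 => h1 h2 h3; lra.
apply: bigcupT_measurable => m; apply: bigcupT_measurable => n.
case: (pselect (exists q, D q /\ f q = n)) => [[q0 [Dq0 fq0]]|nq].
  have -> : H m n = Y @^-1` [set u | d u q0 < m.+1%:R^-1] `&`
                    Z @^-1` [set u | a + m.+1%:R^-1 < d q0 u].
    apply/seteqP; split => s /=.
    - move=> [q [Dq fq h1 h2]]; have eq : q = q0.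
        by apply: finj; rewrite ?inE //; rewrite fq fq0.
      by subst q.
    - by move=> [h1 h2]; exists q0.
  by apply: measurableI; apply: rv_meas => //; [apply: open_lt|apply: open_gt].
have -> : H m n = set0.
  by apply/seteqP; split => s //= [q [Dq fq _ _]]; exfalso; apply: nq; exists q.
exact: measurable0.
Qed.

Lemma meas_lt (Y Z : S -> U) c : random_var d Y -> random_var d Z ->
  measurable [set s | d (Y s) (Z s) < c].
Proof.
move=> hY hZ.
have -> : [set s | d (Y s) (Z s) < c] =
   \bigcup_m ~` [set s | c - m.+1%:R^-1 < d (Y s) (Z s)].
  apply/seteqP; split => s /=.
  - move=> h; have [m hm] := ltr_add_invr h; exists m => //=.
    move: hm; set t := m.+1%:R^-1 => hm h2; lra.
  - move=> [m _]; have h0 : 0 < m.+1%:R^-1 :> R by rewrite invr_gt0.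
    move: h0; set t := m.+1%:R^-1 => h0 h2.
    apply: contrapT => h3; apply: h2; move/negP: h3; rewrite -leNgt => h3.
 rewrite /=; lra.
by apply: bigcupT_measurable => m; apply: measurableC; apply: meas_gt.
Qed.


Definition KF (Y Z : S -> U) := [set e : R | 0 < e /\
   lee (P [set s | e < d (Y s) (Z s)]) e%:E].

Lemma KF_ne Y Z : random_var d Y -> random_var d Z -> KF Y Z !=set0.
Proof.
move=> hY hZ; exists 1; split => //.
by apply: probability_le1; apply: meas_gt.
Qed.

Lemma KF_lb Y Z : has_lbound (KF Y Z).
Proof. by exists 0 => e [/ltW]. Qed.

Lemma kf_lt Y Z a : random_var d Y -> random_var d Z ->
  ky_fan P d Y Z < a -> exists2 e, KF Y Z e & e < a.
Proof. by move=> hY hZ h; apply: inf_lt => //; apply: KF_ne. Qed.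

Lemma kf_le Y Z e : KF Y Z e -> ky_fan P d Y Z <= e.
Proof. by move=> h; apply: (ge_inf (KF_lb Y Z)). Qed.

Lemma kf_self Y eta : 0 < eta -> ky_fan P d Y Y < eta.
Proof.
move=> he; apply: (@le_lt_trans _ _ (eta / 2)); last by rewrite ltr_pdivrMr // ltr_pMr // ltr1n.
apply: kf_le; split; first by rewrite divr_gt0.
have -> : [set s | eta / 2 < d (Y s) (Y s)] = set0.
  apply/seteqP; split => s //=; rewrite d_xx => h.
  have : 0 < eta / 2 by rewrite divr_gt0.
  by rewrite ltNge (ltW h).
by rewrite measure0 lee_fin ltW // divr_gt0.
Qed.

Lemma kf_tri Y Z W a b : random_var d Y -> random_var d Z -> random_var d W ->
  ky_fan P d Y Z < a -> ky_fan P d Z W < b -> ky_fan P d Y W < a + b.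
Proof.
move=> hY hZ hW h1 h2.
have [e1 [e1p He1] e1a] := kf_lt _ _ _ hY hZ h1.
have [e2 [e2p He2] e2b] := kf_lt _ _ _ hZ hW h2.
apply: (@le_lt_trans _ _ (e1 + e2)); last exact: ltrD.
apply: kf_le; split; first exact: addr_gt0.
apply: (@le_trans _ _ (P ([set s | e1 < d (Y s) (Z s)] `|` [set s | e2 < d (Z s) (W s)]))).
  apply: le_measure; rewrite ?inE; try apply: measurableU; try apply: meas_gt => //.
  move=> s /= h; have := d_tri (Y s) (Z s) (W s).
  case: (boolP (e1 < d (Y s) (Z s))) => [?|/negP n1]; first by left.
  case: (boolP (e2 < d (Z s) (W s))) => [?|/negP n2]; first by right.
  move=> h3; exfalso.
  move/negP: n1; rewrite -leNgt => n1; move/negP: n2; rewrite -leNgt => n2.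
  move: h; rewrite /=; lra.
apply: le_trans; first by apply: measureU2; apply: meas_gt.
by rewrite EFinD; apply: leeD.
Qed.


Lemma main_aux (I : set (set nat)) (hI : is_ideal I) (X : nat -> S -> U)
  (hX : forall n, random_var d (X n)) (B : set (S -> U))
  (hB : rho_compact_class P d B) (hBX : ~ I [set n | B (X n)])
  (r : R) (hr : 0 < r) : strong_rough_I_cluster P d I r X !=set0.
Proof.
case: hB => BRV Bsat Bcpt.
have [I0 IU IS] := hI.
apply: contrapT => hne.
pose A (Y : S -> U) (p : R * R) := [set n | lte (1 - p.2)%:E
   (P [set s | d (X n s) (Y s) < r + p.1])].
have [g hg] : exists g : (S -> U) -> R * R, forall Y, B Y ->
    [/\ 0 < (g Y).1, 0 < (g Y).2 & I (A Y (g Y))].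
  suff [f hf] : {f : (S -> U) -> (R * R)%type & forall Y, B Y -> [/\ 0 < (f Y).1, 0 < (f Y).2 & I (A Y (f Y))]} by exists f.
  apply: (@boolp.choice (S -> U) (R * R)%type (fun Y p => B Y -> [/\ 0 < p.1, 0 < p.2 & I (A Y p)])) => Y.
  case: (pselect (B Y)) => BY; last by exists (1,1).
  apply: contrapT => hn; apply: hne; exists Y; split; first exact: BRV.
  by move=> eps delta he hde hIA; apply: hn; exists (eps, delta) => _; split.
pose eta Y := Num.min (g Y).1 (g Y).2.
have etap : forall Y, B Y -> 0 < eta Y.
  by move=> Y /hg [h1 h2 _]; rewrite /eta lt_min h1 h2.
pose O (Y : S -> U) := [set Z | random_var d Z /\ B Y /\ ky_fan P d Y Z < eta Y].
have hopen : forall i, rho_open P d (O i).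
  move=> Y Z rvZ0 [rvZ [BY hZ]].
  exists ((eta Y - ky_fan P d Y Z) / 2); first by rewrite divr_gt0 // subr_gt0.
  move=> W rvW hW; split => //; split => //.
  have rvY := BRV _ BY.
  have := kf_tri Y Z W (ky_fan P d Y Z + (eta Y - ky_fan P d Y Z) / 2) _ rvY rvZ rvW _ hW.
  move: hZ; set k := ky_fan P d Y Z; set et := eta Y => hZ h.
  have : k < k + (et - k) / 2 by rewrite ltrDl divr_gt0 // subr_gt0.
  move/h => h'; move: h'; lra.
have hcov : B `<=` \bigcup_i O i.
  move=> Z BZ; exists Z => //; split; first exact: BRV.
  by split => //; apply: kf_self; exact: etap.
have [F [finF cov]] := Bcpt (S -> U) O hopen hcov.
apply: hBX.
apply: (IS (\bigcup_(Y in F `&` B) A Y (g Y))); last first.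
  apply: ideal_fin_union => //; first exact: finite_setIl.
  by move=> Y [_ BY]; case: (hg _ BY).
move=> n BXn; have [Y FY [rvXn [BY hk]]] := cov _ BXn.
exists Y => //.
have rvY := BRV _ BY.
have [e [e0 He] ee] := kf_lt _ _ _ rvY rvXn hk.
have [g1 g2 _] := hg _ BY.
move: ee; rewrite /eta lt_min => /andP [ee1 ee2].
pose E := [set s | e < d (Y s) (X n s)].
have mE : measurable E by apply: meas_gt.
rewrite /A /=.
apply: (@lt_le_trans _ _ (P (~` E))).
  rewrite probability_setC //.
  have p0 := measure_ge0 P E.
  move: He p0; rewrite -/E.
  case: (P E) => [p| |] He p0.
  - rewrite -EFinB lte_fin; move: He; rewrite lee_fin => He; lra.
  - by [].
  - by rewrite addey ?ltey.
have mL : measurable [set s | d (X n s) (Y s) < r + (g Y).1] by apply: meas_lt.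
apply: (@le_measure _ _ _ P); rewrite ?inE; [exact: measurableC | exact: mL |].
move=> s /= hs; rewrite d_sym.
have : ~~ (e < d (Y s) (X n s)) by apply/negP.
rewrite -leNgt => h; lra.
Qed.

End Aux.

Theorem proposition3p9 (R : realType) (dS : measure_display) (S : measurableType dS)
  (P : probability S R) (U : Type) (d : U -> U -> R)
  (hd : is_metric d) (hsep : separable_metric d)
  (I : set (set nat)) (hI : is_ideal I)
  (X : nat -> S -> U) (hX : forall n, random_var d (X n))
  (B : set (S -> U)) (hB : rho_compact_class P d B)
  (hBX : ~ I [set n | B (X n)]) :
  forall r : R, 0 < r -> strong_rough_I_cluster P d I r X !=set0.
Proof.
exact: (@main_aux R dS S P U d hd hsep I hI X hX B hB hBX).
Qed.
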